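(* Let $\delta\in(0,1)$ and let $f:G_\delta\to\mathbb{C}$ be a function. Suppose there are a Hilbert space $\mathcal{M}$, a unitary operator $U$ on $\mathcal{M}$ and a map $u:G_\delta\to\mathcal{M}$ (not assumed holomorphic) such that for all $\lambda,\mu\in G_\delta$, $$1-\overline{f(\mu)}f(\lambda)=\langle(1-\mu_U^*\lambda_U)u(\lambda),u(\mu)\rangle_{\mathcal{M}}.$$ Then $u$ is holomorphic on $G_\delta$.
   Context: $G_\delta=\{x+iy: x,y\in\mathbb{R},\ \frac{x^2}{(1+\delta)^2}+\frac{y^2}{(1-\delta)^2}<1\}$. For $\lambda\in G_\delta$ and a unitary $U$ on $\mathcal{M}$, $\lambda_U=(\delta U^*-\tfrac12\lambda)(1-\tfrac12\lambda U^* )^{-1}$. *)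

(* Defs.v *)
From mathcomp Require Import all_boot all_order all_algebra.
From mathcomp Require Import boolp classical_sets reals.
From mathcomp Require Export complex.
Set Implicit Arguments.
Unset Strict Implicit.
Unset Printing Implicit Defensive.
Import Order.TTheory GRing.Theory Num.Theory.
Local Open Scope ring_scope.
Local Open Scope classical_set_scope.

Section Defs.
Variable R : realType.
Local Notation C := R[i].

Definition cabs (z : C) : R := Num.sqrt (complex.Re z ^+ 2 + complex.Im z ^+ 2).

Definition G_delta (delta : R) : set C :=
  [set z | (complex.Re z) ^+ 2 / (1 + delta) ^+ 2 + (complex.Im z) ^+ 2 / (1 - delta) ^+ 2 < 1].

Variable M : lmodType C.

Definition ipnorm (ip : M -> M -> C) (x : M) : R := Num.sqrt (complex.Re (ip x x)).

Definition is_hilbert (ip : M -> M -> C) : Prop :=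
  [/\ (forall (a : C) (x y z : M), ip (a *: x + y) z = a * ip x z + ip y z),
      (forall x y : M, ip y x = conjc (ip x y)),
      (forall x : M, complex.Im (ip x x) = 0 /\ 0 <= complex.Re (ip x x)),
      (forall x : M, ip x x = 0 -> x = 0) &
      (forall s : nat -> M,
         (forall e : R, 0 < e -> exists N : nat, forall m n : nat,
            (N <= m)%N -> (N <= n)%N -> ipnorm ip (s m - s n) < e) ->
         exists l : M, forall e : R, 0 < e -> exists N : nat, forall n : nat,
            (N <= n)%N -> ipnorm ip (s n - l) < e)].

Definition is_adjoint (ip : M -> M -> C) (T Tstar : M -> M) : Prop :=
  forall x y : M, ip (T x) y = ip x (Tstar y).

Definition is_unitary_op (ip : M -> M -> C) (U Ustar : M -> M) : Prop :=
  [/\ linear U, is_adjoint ip U Ustar,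
      (forall x, Ustar (U x) = x) & (forall x, U (Ustar x) = x)].

Definition hadj (ip : M -> M -> C) (T : M -> M) : M -> M :=
  fun y => xget 0 [set w | forall x : M, ip (T x) y = ip x w].

(* lambda_U = (delta Ustar - lambda/2)(1 - lambda/2 Ustar)^{-1}, where
   (1 - lambda/2 Ustar)^{-1} x is the unique z with z - (lambda/2) Ustar z = x. *)
Definition lamU (delta : R) (Ustar : M -> M) (lam : C) : M -> M :=
  fun x =>
    let z := xget 0 [set z : M | z - (lam / 2) *: Ustar z = x] in
    (delta%:C)%C *: Ustar z - (lam / 2) *: z.

Definition holomorphic_on (ip : M -> M -> C) (D : set C) (u : C -> M) : Prop :=
  forall l0 : C, D l0 -> exists v : M,
    forall e : R, 0 < e -> exists d : R, 0 < d /\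
      forall h : C, h != 0 -> cabs h < d -> D (l0 + h) ->
        ipnorm ip (h^-1 *: (u (l0 + h) - u l0) - v) < e.

End Defs.

(* Main.v *)
Require Import Defs.
From mathcomp Require Import all_boot all_order all_algebra.
From mathcomp Require Import boolp classical_sets reals.
From mathcomp Require Import ring lra.
Import Order.TTheory GRing.Theory Num.Theory.
Local Open Scope ring_scope.
Local Open Scope classical_set_scope.
Set Implicit Arguments. Unset Strict Implicit. Unset Printing Implicit Defensive.

Section H.
Variable R : realType.
Local Notation C := R[i].
Variable M : lmodType C.
Variable ip : M -> M -> C.
Hypothesis ipl : forall (a : C) (x y z : M), ip (a *: x + y) z = a * ip x z + ip y z.
Hypothesis ipc : forall x y : M, ip y x = conjc (ip x y).
Hypothesis ipp : forall x : M, complex.Im (ip x x) = 0 /\ 0 <= complex.Re (ip x x).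
Hypothesis ipd : forall x : M, ip x x = 0 -> x = 0.

Lemma ip0l z : ip 0 z = 0.
Proof.
have := ipl 1 0 0 z; rewrite scaler0 addr0 mul1r => /eqP.
by rewrite -{1}[ip 0 z]addr0 (inj_eq (addrI _)) eq_sym => /eqP.
Qed.
Lemma ipDl x y z : ip (x + y) z = ip x z + ip y z.
Proof. by have := ipl 1 x y z; rewrite scale1r mul1r. Qed.
Lemma ipZl a x z : ip (a *: x) z = a * ip x z.
Proof. by rewrite -[a *: x]addr0 ipl ip0l addr0. Qed.
Lemma ipNl x z : ip (- x) z = - ip x z.
Proof. by rewrite -scaleN1r ipZl mulN1r. Qed.
Lemma ipBl x y z : ip (x - y) z = ip x z - ip y z.
Proof. by rewrite ipDl ipNl. Qed.
Lemma conjcD (a b : C) : conjc (a + b) = conjc a + conjc b.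
Proof. by case: a; case: b => *; rewrite /conjc /=; congr Complex; rewrite /= ?opprD. Qed.

Lemma conjcK' (a : C) : conjc (conjc a) = a.
Proof. by case: a => a b; rewrite /conjc opprK. Qed.
Lemma ReD' (a b : C) : complex.Re (a + b) = complex.Re a + complex.Re b.
Proof. by case: a; case: b. Qed.
Lemma ReN' (a : C) : complex.Re (- a) = - complex.Re a.
Proof. by case: a. Qed.
Lemma ReJ' (a : C) : complex.Re (conjc a) = complex.Re a.
Proof. by case: a. Qed.
Lemma ReM' (a b : C) : complex.Re (a * b) =
  complex.Re a * complex.Re b - complex.Im a * complex.Im b.
Proof. by case: a => a1 a2; case: b => b1 b2. Qed.
Lemma ImM' (a b : C) : complex.Im (a * b) =
  complex.Re a * complex.Im b + complex.Im a * complex.Re b.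
Proof. by case: a => a1 a2; case: b => b1 b2. Qed.
Lemma ImJ' (a : C) : complex.Im (conjc a) = - complex.Im a.
Proof. by case: a. Qed.
Lemma ImD' (a b : C) : complex.Im (a + b) = complex.Im a + complex.Im b.
Proof. by case: a; case: b. Qed.
Lemma ImN' (a : C) : complex.Im (- a) = - complex.Im a.
Proof. by case: a. Qed.
Lemma ReC' (t : R) : complex.Re (t%:C)%C = t. Proof. by []. Qed.
Lemma ImC' (t : R) : complex.Im (t%:C)%C = 0. Proof. by []. Qed.

Lemma conjcM' (a b : C) : conjc (a * b) = conjc a * conjc b.
Proof. by case: a => a1 a2; case: b => b1 b2; rewrite /conjc /=; congr Complex; ring. Qed.
Lemma conjcN' (a : C) : conjc (- a) = - conjc a.
Proof. by case: a => a1 a2; rewrite /conjc /=. Qed.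
Lemma conjcB' (a b : C) : conjc (a - b) = conjc a - conjc b.
Proof. by rewrite conjcD conjcN'. Qed.
Lemma Re_normsq (a : C) : 0 <= complex.Re (a * conjc a).
Proof. case: a => a1 a2; rewrite /conjc /=; nra. Qed.

Lemma ipDr x y z : ip z (x + y) = ip z x + ip z y.
Proof. by rewrite (ipc x z) (ipc y z) (ipc (x + y) z) ipDl rmorphD. Qed.
Lemma ipZr a x z : ip z (a *: x) = conjc a * ip z x.
Proof. by rewrite (ipc x z) (ipc (a *: x) z) ipZl rmorphM. Qed.
Lemma ipNr x z : ip z (- x) = - ip z x.
Proof. by rewrite -scaleN1r ipZr rmorphN rmorph1 mulN1r. Qed.
Lemma ipBr x y z : ip z (x - y) = ip z x - ip z y.
Proof. by rewrite ipDr ipNr. Qed.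
Lemma ip0r z : ip z 0 = 0.
Proof. by rewrite (ipc 0 z) ip0l rmorph0. Qed.

Lemma cabsE (a : C) : cabs a = Normc.normc a. Proof. by case: a. Qed.
Lemma cabs_ge0 (a : C) : 0 <= cabs a. Proof. exact: sqrtr_ge0. Qed.
Lemma cabsM (a b : C) : cabs (a * b) = cabs a * cabs b.
Proof. by rewrite !cabsE Normc.normcM. Qed.
Lemma cabsD (a b : C) : cabs (a + b) <= cabs a + cabs b.
Proof. by rewrite !cabsE le_normcD. Qed.
Lemma cabsN (a : C) : cabs (- a) = cabs a.
Proof. by rewrite !cabsE normcN. Qed.
Lemma cabsV (a : C) : cabs (a^-1) = (cabs a)^-1.
Proof. by rewrite !cabsE Normc.normcV. Qed.
Lemma cabsJ (a : C) : cabs (conjc a) = cabs a.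
Proof. by case: a => a b; rewrite /cabs /= sqrrN. Qed.
Lemma cabs0 : cabs (0 : C) = 0.
Proof. by rewrite cabsE Normc.normc0. Qed.
Lemma cabs1 : cabs (1 : C) = 1.
Proof. by rewrite cabsE Normc.normc1. Qed.
Lemma cabs_eq0 (a : C) : cabs a = 0 -> a = 0.
Proof. by rewrite cabsE; apply: Normc.eq0_normc. Qed.
Lemma cabsB (a b : C) : cabs (a - b) = cabs (b - a).
Proof. by rewrite -cabsN opprB. Qed.
Lemma cabs_real (t : R) : cabs (t%:C)%C = `|t|.
Proof. by rewrite /cabs /= expr0n /= addr0 sqrtr_sqr. Qed.
Lemma cabs_nat (n : nat) : cabs (n%:R : C) = n%:R.
Proof. by rewrite -(rmorph_nat (real_complex R)) cabs_real ger0_norm. Qed.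

Definition n2 x := complex.Re (ip x x).
Lemma n2_ge0 x : 0 <= n2 x. Proof. by case: (ipp x). Qed.
Lemma ipxx x : ip x x = (n2 x)%:C%C.
Proof.
rewrite /n2; case: (ipp x); case: (ip x x) => a b /= -> _; by [].
Qed.
Lemma n2D x y : n2 (x + y) = n2 x + n2 y + 2 * complex.Re (ip x y).
Proof.
rewrite /n2 ipDl !ipDr !ReD' [ip y x]ipc ReJ'; ring.
Qed.
Lemma n2N x : n2 (- x) = n2 x.
Proof. by rewrite /n2 ipNl ipNr opprK. Qed.
Lemma n2Z a x : n2 (a *: x) = (complex.Re a ^+ 2 + complex.Im a ^+ 2) * n2 x.
Proof.
rewrite /n2 ipZl ipZr ipxx !ReM' !ImM' ReJ' ImJ' ReC' ImC'; ring.
Qed.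

Lemma quad_disc (A B p : R) : 0 <= A -> 0 <= B ->
  (forall t : R, 0 <= t ^+ 2 * A + 2 * t * p + B) -> p ^+ 2 <= A * B.
Proof.
move=> A0 B0 H.
have [Ap|] := ltP 0 A.
  have := H (- p / A).
  have -> : (- p / A) ^+ 2 * A + 2 * (- p / A) * p + B = B - p ^+ 2 / A.
    by field; rewrite gt_eqF.
  rewrite subr_ge0 ler_pdivrMr // => h. by rewrite mulrC.
move=> Ale; have A00 : A = 0 by apply/le_anti; rewrite Ale A0.
have [->|pn] := eqVneq p 0; first by rewrite expr0n /= A00 mul0r.
have := H (- (B + 1) / (2 * p)).
have -> : (- (B + 1) / (2 * p)) ^+ 2 * A + 2 * (- (B + 1) / (2 * p)) * p + B = -1.
  rewrite A00 mulr0 add0r; field; exact: pn.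
by rewrite ler0N1.
Qed.

Definition N x := ipnorm ip x.
Lemma N_ge0 x : 0 <= N x. Proof. exact: sqrtr_ge0. Qed.
Lemma N_sq x : N x ^+ 2 = n2 x. Proof. by rewrite /N /ipnorm sqr_sqrtr // n2_ge0. Qed.

Lemma CS x y : complex.Re (ip x y) <= N x * N y.
Proof.
have H : (complex.Re (ip x y)) ^+ 2 <= n2 x * n2 y.
  apply: quad_disc; rewrite ?n2_ge0 // => t.
  have := n2_ge0 ((t%:C)%C *: x + y); rewrite n2D n2Z ipZl ReM' ReC' ImC'.
  by rewrite expr0n /= addr0 mul0r subr0; nra.
apply: (le_trans (ler_norm _)).
rewrite -sqrtr_sqr /N /ipnorm -sqrtrM ?n2_ge0 //.
exact: ler_wsqrtr.
Qed.

Lemma N_tri x y : N (x + y) <= N x + N y.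
Proof.
rewrite {1}/N /ipnorm -(@ger0_norm _ (N x + N y)) ?addr_ge0 ?N_ge0 //.
rewrite -sqrtr_sqr; apply: ler_wsqrtr; rewrite -/(n2 _) n2D -!N_sq.
have := CS x y; nra.
Qed.
Lemma NZ a x : N (a *: x) = cabs a * N x.
Proof.
rewrite /N /ipnorm -/(n2 _) n2Z sqrtrM; last by rewrite addr_ge0 ?sqr_ge0.
by case: a.
Qed.
Lemma NN x : N (- x) = N x.
Proof. by rewrite /N /ipnorm -/(n2 _) n2N. Qed.
Lemma NB x y : N (x - y) = N (y - x).
Proof. by rewrite -NN opprB. Qed.
Lemma N0 : N 0 = 0.
Proof. by rewrite /N /ipnorm ip0l sqrtr0. Qed.
Lemma N_eq0 x : N x = 0 -> x = 0.
Proof.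
move=> h; apply: ipd; rewrite ipxx.
have : n2 x = 0 by rewrite -N_sq h expr0n.
by move=> ->.
Qed.
Lemma N_le0 x : N x <= 0 -> x = 0.
Proof. by move=> h; apply: N_eq0; apply/le_anti; rewrite h N_ge0. Qed.
Lemma N_triB x y z : N (x - z) <= N (x - y) + N (y - z).
Proof. have {1}-> : x - z = (x - y) + (y - z) by rewrite addrA subrK. exact: N_tri. Qed.

Lemma bernoulli_ineq (a : R) n : 0 <= a -> 1 + n%:R * a <= (1 + a) ^+ n.
Proof.
move=> a0; elim: n => [|n IH]; first by rewrite mul0r addr0 expr0.
rewrite exprS -natr1.
have h1 : 0 <= (1 + a) ^+ n by rewrite exprn_ge0 // addr_ge0.
have h2 : 0 <= n%:R * a :> R by rewrite mulr_ge0.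
have h3 : (1 + a) * (1 + n%:R * a) <= (1 + a) * (1 + a) ^+ n.
  by rewrite ler_wpM2l // addr_ge0.
apply: le_trans h3.
have -> : (1 + a) * (1 + n%:R * a) = 1 + (n%:R + 1) * a + a * (n%:R * a) by ring.
have := mulr_ge0 a0 h2; lra.
Qed.

Lemma geo_small (q e : R) : 0 <= q -> q < 1 -> 0 < e -> exists n, q ^+ n < e.
Proof.
move=> q0 q1 e0.
have [->|qn0] := eqVneq q 0; first by exists 1%N; rewrite expr1.
have qp : 0 < q by rewrite lt_def qn0.
set a := q^-1 - 1.
have ap : 0 < a by rewrite /a subr_gt0 invf_gt1.
have [n Hn] : exists n : nat, (e * a)^-1 < n%:R.
  exists (Num.Def.archi_bound (e * a)^-1); apply: archi_boundP.
  by rewrite invr_ge0 mulr_ge0 // ltW.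
exists n.
have hb := bernoulli_ineq n (ltW ap).
have e1 : q * (1 + a) = 1 by rewrite /a addrC subrK mulfV.
have hq : q ^+ n * (1 + a) ^+ n = 1 by rewrite -exprMn e1 expr1n.
have qn0' : 0 <= q ^+ n by rewrite exprn_ge0.
have h3 : q ^+ n * (1 + n%:R * a) <= 1.
  by apply: le_trans (ler_wpM2l qn0' hb) _; rewrite hq.
have h4 : 1 < n%:R * (e * a).
  by rewrite -ltr_pdivrMr ?mulr_gt0 // div1r.
have h5 : 0 <= n%:R * a :> R by rewrite mulr_ge0 // ltW.
move: h3 h4 h5; rewrite mulrCA; set b := n%:R * a; set P := q ^+ n.
move=> h3 h4 h5; nra.
Qed.

Lemma N_small x : (forall e, 0 < e -> N x < e) -> x = 0.
Proof.
move=> h; apply: N_le0; rewrite leNgt; apply/negP => hx.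
by have := h _ hx; rewrite ltxx.
Qed.

Hypothesis ipcomp : forall s : nat -> M,
  (forall e : R, 0 < e -> exists N0 : nat, forall m n : nat,
     (N0 <= m)%N -> (N0 <= n)%N -> ipnorm ip (s m - s n) < e) ->
  exists l : M, forall e : R, 0 < e -> exists N0 : nat, forall n : nat,
     (N0 <= n)%N -> ipnorm ip (s n - l) < e.

Lemma sub4 (a b c d : M) : (a - b) - (c - d) = (a - c) - (b - d).
Proof. by rewrite !opprB addrACA [in RHS]addrACA [- c + _]addrC. Qed.

Lemma ident (d : R) (c : C) (w z : M) : n2 w = n2 z ->
  n2 ((d%:C)%C *: w - c *: z) = n2 (z - c *: w) + (d ^+ 2 - 1) * n2 z
     + complex.Re ((c + c - (d%:C)%C * conjc c - (d%:C)%C * conjc c) * ip w z).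
Proof.
move=> hwz; rewrite /n2 !(ipBl, ipBr, ipZl, ipZr) (ipc w z) !ipxx -/(n2 w) -/(n2 z) hwz.
move: (ip w z) (n2 z) => P m.
case: P => p1 p2; case: c => c1 c2.
rewrite !(ReD', ImD', ReN', ImN', ReM', ImM', ReJ', ImJ', ReC', ImC') /=.
ring.
Qed.

Lemma N_subtri x y : N (x - y) <= N x + N y.
Proof. by apply: le_trans (N_tri _ _) _; rewrite NN. Qed.

Lemma zid1 (a b p s t : M) : (a - b) - (p - s) - (t - p) = (a - t) - (b - s).
Proof.
by rewrite !opprB -addrA subrKA addrACA [in RHS]addrACA [- t + _]addrC.
Qed.

Section FP.
Variable T : M -> M.
Hypothesis TD : forall x y, T (x + y) = T x + T y.
Hypothesis TZ : forall (a : C) x, T (a *: x) = a *: T x.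
Hypothesis TN : forall x, N (T x) = N x.

Lemma T0 : T 0 = 0.
Proof. by have := TZ 0 0; rewrite !scale0r. Qed.
Lemma TB x y : T (x - y) = T x - T y.
Proof. by rewrite TD -scaleN1r TZ scaleN1r. Qed.

Lemma fp_exists (c : C) x : cabs c < 1 -> exists z, z - c *: T z = x.
Proof.
move=> c1; set q := cabs c.
have q0 : 0 <= q := cabs_ge0 c.
pose s n := iter n (fun z => x + c *: T z) 0.
have sS n : s n.+1 = x + c *: T (s n) by [].
have step n : N (s n.+1 - s n) = q ^+ n * N x.
  elim: n => [|n IH]; first by rewrite expr0 mul1r sS /= T0 scaler0 !addr0 subr0.
  have e2 := sS n.+1; have e1 := sS n; set a := s n.+1 in e2 e1 IH *.
  have -> : s n.+2 - a = c *: T (a - s n).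
    by rewrite e2 TB scalerBr {2}e1 [x + c *: T a]addrC addrKA.
  by rewrite NZ TN -/q IH exprS mulrA.
have bnd n j : N (s (n + j)%N - s n) * (1 - q) <= q ^+ n * (1 - q ^+ j) * N x.
  elim: j => [|j IH]; first by rewrite addn0 subrr N0 expr0 subrr mulr0 !mul0r.
  rewrite addnS.
  have h1 := N_triB (s (n + j).+1) (s (n + j)) (s n).
  rewrite step in h1.
  have h2 : 0 <= 1 - q by rewrite subr_ge0 ltW.
  have h3 := ler_wpM2r h2 h1.
  apply: le_trans h3 _.
  rewrite mulrDl; apply: le_trans (lerD (lexx _) IH) _.
  rewrite exprD exprS; have := N_ge0 x; have := exprn_ge0 n q0; have := exprn_ge0 j q0.
  move=> a b d; set Q := q ^+ n; set Q2 := q ^+ j; set X := N x.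
  rewrite le_eqVlt; apply/orP; left; apply/eqP; ring.
have bnd2 n m : (n <= m)%N -> N (s m - s n) * (1 - q) <= q ^+ n * N x.
  move=> nm; rewrite -(subnKC nm); apply: le_trans (bnd n (m - n)%N) _.
  have := exprn_ge0 (m - n)%N q0; have := N_ge0 x; have := exprn_ge0 n q0.
  set A := q ^+ n; set B := q ^+ (m - n)%N; set X := N x => hA hX hB.
  have := mulr_ge0 (mulr_ge0 hA hB) hX; nra.
have q1 : 0 < 1 - q by rewrite subr_gt0.
have [l Hl] : exists l, forall e : R, 0 < e -> exists N0 : nat, forall n : nat,
     (N0 <= n)%N -> ipnorm ip (s n - l) < e.
  apply: ipcomp => e e0.
  have e1 : 0 < e * (1 - q) / (N x + 1) by rewrite divr_gt0 ?mulr_gt0 // ltr_wpDl ?N_ge0.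
  have [n0 Hn0] := geo_small q0 c1 e1.
  have key n m : (n0 <= n)%N -> (n <= m)%N -> N (s m - s n) < e.
    move=> h1 h2; have := bnd2 _ _ h2.
    have : q ^+ n <= q ^+ n0 by apply: ler_wiXn2l => //; exact: ltW.
    move: Hn0; rewrite ltr_pdivlMr ?ltr_wpDl ?N_ge0 // => Hn0 h3 h4.
    have h5 := N_ge0 x; have h6 := N_ge0 (s m - s n); have h7 := exprn_ge0 n q0.
    rewrite -(ltr_pM2r q1); apply: le_lt_trans h4 _.
    move: Hn0 h3 h5 h6 h7; set A := q ^+ n; set B := q ^+ n0; set X := N x. nra.
  exists n0 => m n hm hn; case: (leqP n m) => h.
    by apply: key.
  by rewrite -/(N _) NB; apply: key => //; exact: ltnW.
exists l; apply/eqP; rewrite -subr_eq0; apply/eqP; apply: N_small => e e0.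
have e2 : 0 < e / 2 by rewrite divr_gt0.
have [N0 HN] := Hl _ e2.
have E : l - c *: T l - x = (l - s N0.+1) + c *: T (s N0 - l).
  by rewrite sS TB scalerBr [in RHS]addrA [in RHS]opprD [in RHS]addrA subrK addrAC.
rewrite E; apply: le_lt_trans (N_tri _ _) _.
rewrite NZ TN NB -/q.
have h1 : N (s N0.+1 - l) < e / 2 := HN N0.+1 (leqnSn _).
have h2 : N (s N0 - l) < e / 2 := HN N0 (leqnn _).
have hB := N_ge0 (s N0 - l); have hq : 0 <= 1 - q by rewrite subr_ge0 ltW.
have := mulr_ge0 hq hB; move: h1 h2 hB.
set A := N (s N0.+1 - l); set B := N (s N0 - l) => h1 h2 hB hqB.
have -> : e = e / 2 + e / 2 by field.
lra.
Qed.

Lemma fp_bound (c : C) z : cabs c < 1 -> N z * (1 - cabs c) <= N (z - c *: T z).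
Proof.
move=> c1; have := N_tri (z - c *: T z) (c *: T z); rewrite subrK NZ TN.
move=> h; rewrite mulrBr mulr1; lra.
Qed.

Lemma fp_unique (c : C) z z' : cabs c < 1 -> z - c *: T z = z' - c *: T z' -> z = z'.
Proof.
move=> c1 e; apply/eqP; rewrite -subr_eq0; apply/eqP; apply: N_le0.
have := fp_bound (z - z') c1.
rewrite TB scalerBr sub4 e subrr N0.
have := N_ge0 (z - z'); have : 0 < 1 - cabs c by rewrite subr_gt0.
move=> *; nra.
Qed.
End FP.

Section Ops.
Variables (U Ustar : M -> M).
Hypothesis UL : forall (a : C) x y, U (a *: x + y) = a *: U x + U y.
Hypothesis Uadj : forall x y, ip (U x) y = ip x (Ustar y).
Hypothesis UK : forall x, Ustar (U x) = x.
Hypothesis UsK : forall x, U (Ustar x) = x.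

Lemma UD x y : U (x + y) = U x + U y.
Proof. by have := UL 1 x y; rewrite !scale1r. Qed.
Lemma UZ a x : U (a *: x) = a *: U x.
Proof.
have h0 : U 0 = 0.
  by have := UL (-1) 0 0; rewrite !scaleN1r oppr0 addr0 addNr.
by have := UL a x 0; rewrite addr0 h0 addr0.
Qed.
Lemma UsD x y : Ustar (x + y) = Ustar x + Ustar y.
Proof. by rewrite -{1}[x]UsK -{1}[y]UsK -UD UK. Qed.
Lemma UsZ a x : Ustar (a *: x) = a *: Ustar x.
Proof. by rewrite -{1}[x]UsK -UZ UK. Qed.
Lemma Usadj x y : ip (Ustar x) y = ip x (U y).
Proof. by rewrite ipc -Uadj -ipc. Qed.
Lemma UN x : N (U x) = N x.
Proof. by rewrite /N /ipnorm Uadj UK. Qed.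
Lemma UsN x : N (Ustar x) = N x.
Proof. by rewrite /N /ipnorm Usadj UsK. Qed.
Lemma UsB x y : Ustar (x - y) = Ustar x - Ustar y.
Proof. by rewrite UsD -scaleN1r UsZ scaleN1r. Qed.

Definition res (c : C) (x : M) := xget 0 [set z : M | z - c *: Ustar z = x].
Lemma resP c x : cabs c < 1 -> res c x - c *: Ustar (res c x) = x.
Proof.
move=> c1; have [z hz] := fp_exists UsD UsZ UsN x c1.
by have := @xgetI _ 0 [set z : M | z - c *: Ustar z = x] z hz.
Qed.
Lemma resU c x z : cabs c < 1 -> z - c *: Ustar z = x -> res c x = z.
Proof. move=> c1 h; apply: (fp_unique UsD UsZ UsN c1); by rewrite resP // h. Qed.
Lemma resD c x y : cabs c < 1 -> res c (x + y) = res c x + res c y.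
Proof.
move=> c1; apply: resU => //; rewrite UsD scalerDr.
by rewrite opprD addrACA !resP.
Qed.
Lemma resZ c a x : cabs c < 1 -> res c (a *: x) = a *: res c x.
Proof.
move=> c1; apply: resU => //; rewrite UsZ scalerA mulrC -scalerA -scalerBr.
by rewrite resP.
Qed.
Lemma resB c x y : cabs c < 1 -> res c (x - y) = res c x - res c y.
Proof. by move=> c1; rewrite resD // -scaleN1r resZ // scaleN1r. Qed.
Lemma res_bound c x : cabs c < 1 -> N (res c x) * (1 - cabs c) <= N x.
Proof. move=> c1; have := fp_bound UsN (res c x) c1; by rewrite resP. Qed.

Variable delta : R.
Definition A (lam : C) x := (delta%:C)%C *: Ustar (res (lam / 2) x) - (lam / 2) *: res (lam / 2) x.
Lemma AE lam x : lamU delta Ustar lam x = A lam x.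
Proof. by []. Qed.

Hypothesis d0 : 0 < delta.
Hypothesis d1 : delta < 1.

Lemma sqrt_lt (X Y : R) : 0 < Y -> X < Y ^+ 2 -> Num.sqrt X < Y.
Proof.
move=> Y0 h; rewrite -(ger0_norm (ltW Y0)) -sqrtr_sqr ltr_sqrt //.
by rewrite exprn_gt0.
Qed.

Lemma G_ineq (a b : R) : G_delta delta (a +i* b)%C ->
  a ^+ 2 * (1 - delta) ^+ 2 + b ^+ 2 * (1 + delta) ^+ 2 < (1 + delta) ^+ 2 * (1 - delta) ^+ 2.
Proof.
rewrite /G_delta /=.
have P0 : 0 < (1 + delta) ^+ 2 by rewrite exprn_gt0 // ltr_wpDr // ltW.
have Q0 : 0 < (1 - delta) ^+ 2 by rewrite exprn_gt0 // subr_gt0.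
have -> : a ^+ 2 / (1 + delta) ^+ 2 + b ^+ 2 / (1 - delta) ^+ 2 =
  (a ^+ 2 * (1 - delta) ^+ 2 + b ^+ 2 * (1 + delta) ^+ 2) / ((1 + delta) ^+ 2 * (1 - delta) ^+ 2).
  have n1 : 1 + delta != 0 by rewrite gt_eqF //; have := d0; lra.
  have n2 : 1 - delta != 0 by rewrite gt_eqF //; have := d1; lra.
  by field; rewrite ?n1 ?n2.
by rewrite (ltr_pdivrMr _ _ (mulr_gt0 P0 Q0)) mul1r.
Qed.

Definition q0 := (1 + delta) / 2.
Lemma q0_lt1 : q0 < 1. Proof. have := d1; rewrite /q0; lra. Qed.
Lemma q0_ge0 : 0 <= q0. Proof. have := d0; rewrite /q0; lra. Qed.

Lemma cabs_half (z : C) : cabs (z / 2) = cabs z / 2.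
Proof. by rewrite cabsM cabsV cabs_nat. Qed.

Lemma G_small lam : G_delta delta lam -> cabs (lam / 2) <= q0.
Proof.
case: lam => a b h; have := G_ineq h; have := d0; have := d1; move=> dd1 dd0.
rewrite cabs_half /q0 ler_pM2r ?invr_gt0 // /cabs /=.
move=> h2; apply: ltW; apply: sqrt_lt; first lra.
have hd : 0 < 1 - delta by lra.
have hP : (1 - delta) ^+ 2 < (1 + delta) ^+ 2 by rewrite ltrXn2r // ?ltW //; lra.
have ha := sqr_ge0 a; have hb := sqr_ge0 b.
have hQ : 0 < (1 - delta) ^+ 2 by rewrite exprn_gt0.
move: h2 hP hQ ha hb; set P := (1 + delta) ^+ 2; set Q := (1 - delta) ^+ 2; set A2 := a ^+ 2; set B2 := b ^+ 2.
move=> h2 hP hQ ha hb.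
have h3 : 0 <= B2 * (P - Q) by rewrite mulr_ge0 // subr_ge0 ltW.
have h4 : (A2 + B2) * Q < P * Q by move: h2 h3; rewrite mulrDl mulrBr; lra.
by rewrite -(ltr_pM2r hQ).
Qed.
Lemma G_lt1 lam : G_delta delta lam -> cabs (lam / 2) < 1.
Proof. by move=> h; apply: le_lt_trans (G_small h) q0_lt1. Qed.

Lemma G_kappa lam : G_delta delta lam ->
  cabs (lam - (delta%:C)%C * conjc lam) < 1 - delta ^+ 2.
Proof.
case: lam => a b h; have := G_ineq h; have := d0; have := d1; move=> dd1 dd0.
rewrite /cabs !(ReD', ImD', ReN', ImN', ReM', ImM', ReJ', ImJ', ReC', ImC') /=.
move=> h2; apply: sqrt_lt; first by nra.
have -> : (1 - delta ^+ 2) ^+ 2 = (1 + delta) ^+ 2 * (1 - delta) ^+ 2 by ring.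
apply: le_lt_trans h2; rewrite le_eqVlt; apply/orP; left; apply/eqP; ring.
Qed.

Lemma A_D lam x y : cabs (lam / 2) < 1 -> A lam (x + y) = A lam x + A lam y.
Proof. by move=> c1; rewrite /A resD // UsD !scalerDr opprD addrACA. Qed.
Lemma A_Z lam a x : cabs (lam / 2) < 1 -> A lam (a *: x) = a *: A lam x.
Proof.
move=> c1; rewrite /A resZ // UsZ scalerBr !scalerA.
by rewrite [_ * a]mulrC [lam / 2 * a]mulrC.
Qed.
Lemma A_B lam x y : cabs (lam / 2) < 1 -> A lam (x - y) = A lam x - A lam y.
Proof. by move=> c1; rewrite A_D // -scaleN1r A_Z // scaleN1r. Qed.

Lemma A_adj lam y : cabs (lam / 2) < 1 -> exists w, forall x, ip (A lam x) y = ip x w.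
Proof.
move=> c1; set c := lam / 2.
set y' := (delta%:C)%C *: U y - conjc c *: y.
have c1' : cabs (conjc c) < 1 by rewrite cabsJ.
have [s hs] := fp_exists UD UZ UN y' c1'.
exists s => x.
set z := res c x.
have hz : z - c *: Ustar z = x by apply: resP.
have e1 : ip (A lam x) y = ip z y'.
  rewrite /A -/c -/z ipBl !ipZl Usadj /y' ipBr !ipZr conjc_real conjcK'.
  by [].
rewrite e1 -hs -hz ipBr ipZr conjcK' ipBl ipZl Usadj.
by [].
Qed.

Lemma hadj_spec lam y : cabs (lam / 2) < 1 -> forall x,
  ip (A lam x) y = ip x (hadj ip (lamU delta Ustar lam) y).
Proof.
move=> c1; have [w hw] := A_adj y c1.
have := @xgetI _ 0 [set w : M | forall x : M, ip (lamU delta Ustar lam x) y = ip x w] w hw.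
by [].
Qed.

Lemma A_contr lam : G_delta delta lam ->
  exists r, 0 <= r /\ r < 1 /\ forall x, N (A lam x) <= r * N x.
Proof.
move=> hG; have c1 := G_lt1 hG; have dd0 := d0; have dd1 := d1.
set c := lam / 2 in c1 *.
set k := c + c - (delta%:C)%C * conjc c - (delta%:C)%C * conjc c.
have hk : cabs k < 1 - delta ^+ 2.
  have -> : k = lam - (delta%:C)%C * conjc lam.
    have e : c + c = lam by rewrite /c; field.
    by rewrite -e conjcD /k; ring.
  exact: G_kappa.
set eps := 1 - delta ^+ 2 - cabs k.
have eps0 : 0 < eps by rewrite /eps; lra.
have eps1 : eps <= 1.
  have := cabs_ge0 k; have := sqr_ge0 delta; rewrite /eps; lra.
have r0 : 0 <= 1 - eps / 4 by lra.
exists (Num.sqrt (1 - eps / 4)); split; first exact: sqrtr_ge0.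
split; first by apply: sqrt_lt; lra.
move=> x; set z := res c x.
have hz : z - c *: Ustar z = x by apply: resP.
have hw : n2 (Ustar z) = n2 z by rewrite -!N_sq UsN.
have id := ident delta c hw; rewrite hz in id.
have cs : complex.Re (k * ip (Ustar z) z) <= cabs k * N z * N z.
  by rewrite -ipZl; apply: le_trans (CS _ _) _; rewrite NZ UsN.
have nx : N x <= 2 * N z.
  rewrite -hz; apply: le_trans (N_subtri _ _) _; rewrite NZ UsN.
  have := N_ge0 z; have := cabs_ge0 c; nra.
have hA : A lam x = (delta%:C)%C *: Ustar z - c *: z by [].
rewrite hA /N /ipnorm -sqrtrM // -/(n2 _); apply: ler_wsqrtr.
rewrite id -/(n2 x) -!N_sq.
have := N_ge0 z; have := N_ge0 x; move: cs nx eps0 eps1.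
rewrite -/k; set Z := N z; set X := N x; set K := cabs k; set P := complex.Re _.
rewrite /eps -/K => hcs hnx he0 he1 hX hZ.
have h1 : X ^+ 2 <= 4 * Z ^+ 2 by nra.
have h2 : 0 <= (1 - delta ^+ 2 - K) * (4 * Z ^+ 2 - X ^+ 2).
  by apply: mulr_ge0; lra.
have h3 : P <= K * Z ^+ 2 by rewrite expr2 mulrA.
nra.
Qed.

Lemma res_diff c c' x : cabs c < 1 -> cabs c' < 1 ->
  res c' x - res c x = (c' - c) *: res c (Ustar (res c' x)).
Proof.
move=> c1 c1'; rewrite -resZ //; symmetry; apply: resU => //.
set z' := res c' x; set z := res c x.
have hz : z - c *: Ustar z = x by apply: resP.
have hz' : z' - c' *: Ustar z' = x by apply: resP.
rewrite UsB scalerBr sub4 hz -hz' scalerBl opprB addrC subrKA.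
by [].
Qed.

Lemma res_lip (c c' : C) x q : cabs c <= q -> cabs c' <= q -> q < 1 ->
  N (res c' x - res c x) * ((1 - q) * (1 - q)) <= cabs (c' - c) * N x.
Proof.
move=> hc hc' q1.
have c1 : cabs c < 1 by apply: le_lt_trans q1.
have c1' : cabs c' < 1 by apply: le_lt_trans q1.
rewrite res_diff // NZ.
set g := res c _; set z' := res c' x.
have h1 := res_bound (Ustar z') c1; rewrite -/g UsN in h1.
have h2 := res_bound x c1'; rewrite -/z' in h2.
have := N_ge0 g; have := N_ge0 z'; have := N_ge0 x; have := cabs_ge0 (c' - c).
have := cabs_ge0 c; have := cabs_ge0 c'.
move: h1 h2; set G := N g; set Z := N z'; set X := N x; set D := cabs (c' - c).
move=> h1 h2 *.
have h3 : G * (1 - q) <= Z by apply: le_trans h1; apply: ler_wpM2l; lra.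
have h4 : Z * (1 - q) <= X by apply: le_trans h2; apply: ler_wpM2l; lra.
have h5 : G * ((1 - q) * (1 - q)) <= X.
  apply: le_trans h4; rewrite mulrA; apply: ler_wpM2r; lra.
rewrite -mulrA; apply: ler_wpM2l => //.
Qed.

Lemma A_diff p l x : cabs (p / 2) < 1 -> cabs (l / 2) < 1 ->
  A p x - A l x = (p / 2 - l / 2) *: (A l (Ustar (res (p / 2) x)) - res (p / 2) x).
Proof.
move=> cp cl.
set c := l / 2 in cl *; set c' := p / 2 in cp *.
set z' := res c' x; set z := res c x.
rewrite {3}/A -/c.
set g := res c (Ustar z').
have hD : (c' - c) *: g = z' - z by rewrite res_diff.
rewrite !scalerBr scalerA [(c' - c) * _]mulrC -scalerA -UsZ hD.
rewrite scalerA [(c' - c) * c]mulrC -scalerA hD.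
rewrite UsB !scalerBr scalerBl zid1.
by [].
Qed.

Lemma A_bound l y : G_delta delta l -> N (A l y) * (1 - q0) <= 2 * N y.
Proof.
move=> hG; have cl := G_small hG; have c1 := G_lt1 hG.
rewrite /A; set z := res (l / 2) y.
have h1 := res_bound y c1; rewrite -/z in h1.
have h2 : N (A l y) <= 2 * N z.
  rewrite /A -/z; apply: le_trans (N_subtri _ _) _; rewrite !NZ UsN cabs_real (ger0_norm (ltW d0)).
  have := N_ge0 z; have := d1; have := cabs_ge0 (l / 2); have := q0_lt1; nra.
have := N_ge0 z; have := N_ge0 y; have := q0_lt1; have := cabs_ge0 (l / 2).
move: h1 h2 cl; rewrite /A -/z; set Z := N z; set Y := N y; set Q := cabs (l / 2); set Av := N _.
move=> h1 h2 cl *.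
have h3 : Z * (1 - q0) <= Y by apply: le_trans h1; apply: ler_wpM2l; lra.
have h4 : 0 <= 1 - q0 by lra.
have := ler_wpM2r h4 h2; lra.
Qed.

Definition W l p x := A l (Ustar (res (p / 2) x)) - res (p / 2) x.

Lemma A_W p l x : G_delta delta p -> G_delta delta l ->
  A p x - A l x = (p / 2 - l / 2) *: W l p x.
Proof. by move=> hp hl; rewrite A_diff // ?G_lt1. Qed.

Lemma W_B l p x y : G_delta delta l -> G_delta delta p ->
  W l p (x - y) = W l p x - W l p y.
Proof.
move=> hl hp; rewrite /W resB ?G_lt1 // UsB A_B ?G_lt1 //.
by rewrite sub4.
Qed.

Lemma W_aux l y : G_delta delta l ->
  N (A l (Ustar y) - y) * (1 - q0) <= 3 * N y.
Proof.
move=> hl; have h1 := A_bound (Ustar y) hl; rewrite UsN in h1.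
have h2 := N_subtri (A l (Ustar y)) y.
have := q0_lt1; have := q0_ge0; have := N_ge0 y.
move: h1 h2; set a := N (A l _); set b := N (_ - _); set Y := N y => h1 h2 *.
have h4 : 0 <= 1 - q0 by lra.
have := ler_wpM2r h4 h2; nra.
Qed.

Lemma W_bound l p x : G_delta delta l -> G_delta delta p ->
  N (W l p x) * ((1 - q0) * (1 - q0)) <= 3 * N x.
Proof.
move=> hl hp; rewrite /W; set z := res (p / 2) x.
have h1 := W_aux z hl.
have h2 := res_bound x (G_lt1 hp); rewrite -/z in h2.
have h3 := G_small hp.
have := q0_lt1; have := q0_ge0; have := N_ge0 z; have := N_ge0 x.
move: h1 h2 h3; set w := N (_ - _); set Z := N z; set X := N x; set Q := cabs _ => h1 h2 h3 *.
have h4 : Z * (1 - q0) <= X by apply: le_trans h2; apply: ler_wpM2l; lra.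
have h5 : 0 <= 1 - q0 by lra.
have := ler_wpM2r h5 h1; rewrite mulrA; nra.
Qed.

Lemma W_lip l p p' x : G_delta delta l -> G_delta delta p -> G_delta delta p' ->
  N (W l p x - W l p' x) * ((1 - q0) * ((1 - q0) * (1 - q0))) <= 3 * (cabs (p / 2 - p' / 2) * N x).
Proof.
move=> hl hp hp'; rewrite /W.
set z := res (p / 2) x; set z' := res (p' / 2) x.
have -> : A l (Ustar z) - z - (A l (Ustar z') - z') = A l (Ustar (z - z')) - (z - z').
  by rewrite UsB A_B ?G_lt1 // sub4.
have h1 := W_aux (z - z') hl.
have h2 := res_lip x (G_small hp') (G_small hp) q0_lt1; rewrite -/z -/z' in h2.
have := q0_lt1; have := q0_ge0; have := N_ge0 (z - z'); have := cabs_ge0 (p / 2 - p' / 2).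
move: h1 h2; set w := N (A l _ - _); set D := N (z - z'); set K := cabs _ => h1 h2 *.
have h5 : 0 <= 1 - q0 by lra.
have h6 : 0 <= (1 - q0) * (1 - q0) by apply: mulr_ge0.
have := ler_wpM2r h6 h1; move=> h7; lra.
Qed.

Lemma G_dir l0 : G_delta delta l0 -> exists v0 : C, v0 != 0 /\
  forall t : R, 0 < t -> t <= 1 -> G_delta delta (l0 + ((t%:C)%C * v0)).
Proof.
move=> hG; have dd0 := d0; have dd1 := d1.
have P0 : 0 < (1 + delta) ^+ 2 by rewrite exprn_gt0 //; lra.
have Q0 : 0 < (1 - delta) ^+ 2 by rewrite exprn_gt0 //; lra.
have [->|ln] := eqVneq l0 0.
  exists 1; split; first exact: oner_neq0.
  move=> t t0 t1; rewrite add0r mulr1 /G_delta /= expr0n /= mul0r addr0.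
  rewrite ltr_pdivrMr // mul1r; rewrite ltrXn2r //; lra.
exists (- l0); split; first by rewrite oppr_eq0.
move=> t t0 t1; move: hG; case: l0 ln => a b _.
rewrite /G_delta /=; rewrite ?(ReD', ImD', ReN', ImN', ReM', ImM', ReJ', ImJ', ReC', ImC') /=.
have n1 : 1 + delta != 0 by rewrite gt_eqF //; lra.
have n2 : 1 - delta != 0 by rewrite gt_eqF //; lra.
have -> : (a + (t * - a - 0 * - b)) ^+ 2 / (1 + delta) ^+ 2 + (b + (t * - b + 0 * - a)) ^+ 2 / (1 - delta) ^+ 2
   = (1 - t) ^+ 2 * (a ^+ 2 / (1 + delta) ^+ 2 + b ^+ 2 / (1 - delta) ^+ 2).
  by field; rewrite ?n1 ?n2.
have X0 : 0 <= a ^+ 2 / (1 + delta) ^+ 2 + b ^+ 2 / (1 - delta) ^+ 2.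
  by apply: addr_ge0; apply: divr_ge0; rewrite ?sqr_ge0 // ltW.
move: X0; set X := _ + _ => X0 hX.
have s1 : (1 - t) ^+ 2 <= 1 by rewrite expr2; nra.
have s0 : 0 <= (1 - t) ^+ 2 := sqr_ge0 _.
nra.
Qed.

Lemma small_idx (c eta : R) : 0 <= c -> 0 < eta ->
  exists N0, forall n, (N0 <= n)%N -> (n.+1%:R)^-1 * c < eta.
Proof.
move=> c0 e0.
have hb := archi_boundP (divr_ge0 c0 (ltW e0)).
exists (Num.Def.archi_bound (c / eta)) => n hn.
rewrite mulrC ltr_pdivrMr ?ltr0Sn //.
have : (Num.Def.archi_bound (c / eta))%:R <= n%:R :> R by rewrite ler_nat.
move: hb; rewrite ltr_pdivrMr // => hb h.
have : n%:R < n.+1%:R :> R by rewrite ltr_nat.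
nra.
Qed.

Section Main.
Variables (f : C -> C) (u : C -> M).
Hypothesis Hk : forall lam mu, G_delta delta lam -> G_delta delta mu ->
  ip (u lam) (u mu) = 1 - conjc (f mu) * f lam + ip (A lam (u lam)) (A mu (u mu)).

Lemma iso3 p1 p2 p3 (a1 a2 : C) : G_delta delta p1 -> G_delta delta p2 -> G_delta delta p3 ->
  N (a1 *: u p1 + a2 *: u p2 - (a1 + a2) *: u p3) <=
  N (a1 *: A p1 (u p1) + a2 *: A p2 (u p2) - (a1 + a2) *: A p3 (u p3)).
Proof.
move=> h1 h2 h3.
suff : n2 (a1 *: u p1 + a2 *: u p2 - (a1 + a2) *: u p3) <=
  n2 (a1 *: A p1 (u p1) + a2 *: A p2 (u p2) - (a1 + a2) *: A p3 (u p3)).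
  by rewrite /N /ipnorm; apply: ler_wsqrtr.
set F := a1 * f p1 + a2 * f p2 - (a1 + a2) * f p3.
suff E : ip (a1 *: u p1 + a2 *: u p2 - (a1 + a2) *: u p3) (a1 *: u p1 + a2 *: u p2 - (a1 + a2) *: u p3) =
  ip (a1 *: A p1 (u p1) + a2 *: A p2 (u p2) - (a1 + a2) *: A p3 (u p3))
     (a1 *: A p1 (u p1) + a2 *: A p2 (u p2) - (a1 + a2) *: A p3 (u p3)) - F * conjc F.
  rewrite /n2 E ReD' ReN'; have := Re_normsq F; lra.
have e11 := Hk h1 h1; have e12 := Hk h1 h2; have e13 := Hk h1 h3.
have e21 := Hk h2 h1; have e22 := Hk h2 h2; have e23 := Hk h2 h3.
have e31 := Hk h3 h1; have e32 := Hk h3 h2; have e33 := Hk h3 h3.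
move: e11 e12 e13 e21 e22 e23 e31 e32 e33.
move: (A p1 (u p1)) (A p2 (u p2)) (A p3 (u p3)) => X1 X2 X3.
move: (u p1) (u p2) (u p3) => y1 y2 y3 e11 e12 e13 e21 e22 e23 e31 e32 e33.
rewrite !(ipDl, ipDr, ipBl, ipBr, ipZl, ipZr, ipNl, ipNr).
rewrite e11 e12 e13 e21 e22 e23 e31 e32 e33.
rewrite /F !(conjcD, conjcB', conjcM', conjcN').
ring.
Qed.

Lemma zid2 (a b c d e : M) : (a + b) + (c + d) - e = (a + c - e) + (b + d).
Proof. by rewrite addrACA; exact: addrAC. Qed.

Section Main2.
Variable l0 : C.
Hypothesis hG0 : G_delta delta l0.
Variable r : R.
Hypothesis r0 : 0 <= r.
Hypothesis r1 : r < 1.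
Hypothesis hr : forall x, N (A l0 x) <= r * N x.

Definition E := 1 - q0.
Lemma E_gt0 : 0 < E. Proof. by rewrite /E subr_gt0 q0_lt1. Qed.
Definition K := 3 / (E * E).
Definition K3 := 3 / (E * (E * E)).
Lemma K_ge0 : 0 <= K. Proof. by rewrite /K divr_ge0 // mulr_ge0 // ltW // E_gt0. Qed.
Lemma K3_ge0 : 0 <= K3. Proof. by rewrite /K3 divr_ge0 // !mulr_ge0 // ltW // E_gt0. Qed.

Lemma WK p x : G_delta delta p -> N (W l0 p x) <= K * N x.
Proof.
move=> hp; have := W_bound x hG0 hp; rewrite -/E /K.
have EE : 0 < E * E by rewrite mulr_gt0 // E_gt0.
by move=> h; rewrite mulrAC ler_pdivlMr.
Qed.

Lemma WK3 p p' x : G_delta delta p -> G_delta delta p' ->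
  N (W l0 p x - W l0 p' x) <= K3 * cabs (p / 2 - p' / 2) * N x.
Proof.
move=> hp hp'; have := W_lip x hG0 hp hp'; rewrite -/E /K3.
have EE : 0 < E * (E * E) by rewrite !mulr_gt0 // E_gt0.
by move=> h; rewrite -mulrA mulrAC ler_pdivlMr.
Qed.

Lemma cabs_half2 (p l : C) : cabs (p / 2 - l / 2) = cabs (p - l) / 2.
Proof. by rewrite -mulrBl cabs_half. Qed.

Lemma cont p : G_delta delta p -> K * cabs (p - l0) <= 1 - r ->
  N (u p - u l0) * (1 - r) <= K * cabs (p - l0) * N (u l0).
Proof.
move=> hp ht.
have h1 := iso3 1 (-1) hp hG0 hG0.
rewrite subrr !scale0r !subr0 !scale1r !scaleN1r in h1.
have e : A p (u p) - A l0 (u l0) = (p / 2 - l0 / 2) *: W l0 p (u p) + A l0 (u p - u l0).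
  by rewrite -A_W // A_B ?G_lt1 // subrKA.
rewrite e in h1.
have h2 := N_tri ((p / 2 - l0 / 2) *: W l0 p (u p)) (A l0 (u p - u l0)).
rewrite NZ cabs_half2 in h2.
have h3 := WK (u p) hp.
have h4 := hr (u p - u l0).
have h5 : N (u p) <= N (u l0) + N (u p - u l0).
  by have := N_tri (u l0) (u p - u l0); rewrite addrC subrK.
have := N_ge0 (u p); have := N_ge0 (u l0); have := N_ge0 (u p - u l0); have := N_ge0 (W l0 p (u p)).
have := cabs_ge0 (p - l0); have := K_ge0; have := r0; have := r1.
move: h1 h2 h3 h4 h5 ht.
set d := N (u p - u l0); set n0 := N (u l0); set np := N (u p); set w := N (W _ _ _).
set t := cabs (p - l0); set a := N (A l0 _) => h1 h2 h3 h4 h5 ht *.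
have h6 : t / 2 * w <= t / 2 * (K * (n0 + d)).
  apply: ler_wpM2l; first by rewrite divr_ge0.
  apply: le_trans h3 _; apply: ler_wpM2l => //.
have h7 : d <= t / 2 * (K * (n0 + d)) + r * d by lra.
have h8 : d * (1 - r) * 2 <= K * t * n0 + K * t * d.
  by move: h7; rewrite !mulrDr; lra.
have h9 : K * t * d <= (1 - r) * d by apply: ler_wpM2r.
lra.
Qed.

Definition Q p := (p - l0)^-1 *: (u p - u l0).

Lemma cstep p p' : G_delta delta p -> G_delta delta p' -> p - l0 != 0 -> p' - l0 != 0 ->
  N (Q p - Q p') * (1 - r) <=
  2^-1 * (K * N (u p - u p') + K3 * cabs (p / 2 - p' / 2) * N (u p')).
Proof.
move=> hp hp' hn hn'.
set h := p - l0 in hn *; set k := p' - l0 in hn' *.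
have h1 := iso3 (h^-1) (-(k^-1)) hp hp' hG0.
have eY : h^-1 *: u p + - k^-1 *: u p' - (h^-1 + - k^-1) *: u l0 = Q p - Q p'.
  by rewrite /Q -/h -/k scalerDl !scaleNr !scalerBr sub4.
rewrite eY in h1.
have eAp : A p (u p) = A l0 (u p) + (p / 2 - l0 / 2) *: W l0 p (u p).
  by rewrite -A_W // addrC subrK.
have eAp' : A p' (u p') = A l0 (u p') + (p' / 2 - l0 / 2) *: W l0 p' (u p').
  by rewrite -A_W // addrC subrK.
have c0 := G_lt1 hG0.
have eA : A l0 (h^-1 *: u p + - k^-1 *: u p' - (h^-1 + - k^-1) *: u l0) =
   h^-1 *: A l0 (u p) + - k^-1 *: A l0 (u p') - (h^-1 + - k^-1) *: A l0 (u l0).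
  by rewrite A_B // A_D // !A_Z.
have s1 : h^-1 * (p / 2 - l0 / 2) = 2^-1.
  by rewrite -mulrBl -/h; field; rewrite hn.
have s2 : - k^-1 * (p' / 2 - l0 / 2) = - 2^-1.
  by rewrite -mulrBl -/k; field; rewrite hn'.
have h6 := hr (Q p - Q p').
have eW : W l0 p (u p) - W l0 p' (u p') =
   W l0 p (u p - u p') + (W l0 p (u p') - W l0 p' (u p')).
  by rewrite W_B // subrKA.
have h3 := N_tri (W l0 p (u p - u p')) (W l0 p (u p') - W l0 p' (u p')).
rewrite -eW in h3.
have h4 := WK (u p - u p') hp.
have h5 := WK3 (u p') hp hp'.
rewrite eAp eAp' in h1; rewrite eY in eA.
move: h1 eA h6 h3 h4 h5.
move: (A l0 (u p)) (A l0 (u p')) (A l0 (u l0)) (A l0 (Q p - Q p')) => P1 P2 P3 AQ.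
move: (W l0 p (u p)) (W l0 p' (u p')) => w1 w2 h1 eA h6 h3 h4 h5.
rewrite !scalerDr !scalerA s1 s2 zid2 -eA scaleNr -scalerBr in h1.
have h2 := N_tri AQ (2^-1 *: (w1 - w2)).
rewrite NZ in h2.
have c2 : cabs (2^-1 : C) = 2^-1 by rewrite cabsV cabs_nat.
rewrite c2 in h2.
move: h1 h2 h3 h4 h5 h6.
set y := N (Q p - Q p'); set wd := N (w1 - w2).
set X := N (_ + _); set a := N AQ.
move=> h1 h2 h3 h4 h5 h6.
have : 0 <= wd := N_ge0 _.
lra.
Qed.

Lemma cauchy_est : exists B, exists rho, 0 <= B /\ 0 < rho /\
  forall p p', G_delta delta p -> G_delta delta p' -> p - l0 != 0 -> p' - l0 != 0 ->
   cabs (p - l0) < rho -> cabs (p' - l0) < rho ->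
   N (Q p - Q p') <= B * (cabs (p - l0) + cabs (p' - l0)).
Proof.
have hK := K_ge0; have hK3 := K3_ge0; have r0' := r0; have r1' := r1.
have omr : 0 < 1 - r by lra.
set n0 := N (u l0).
have hn0 : 0 <= n0 := N_ge0 _.
set C0 := K * n0 / (1 - r).
have hC0 : 0 <= C0 by apply: divr_ge0; [exact: mulr_ge0 | exact: ltW].
set rho := (1 - r) / (K + 1).
have hrho : 0 < rho by rewrite /rho divr_gt0 //; lra.
have rhoK : rho * (K + 1) = 1 - r by rewrite /rho mulfVK //; apply: lt0r_neq0; lra.
have rho1 : rho <= 1.
  have : rho * (K + 1) <= 1 by rewrite rhoK; lra.
  have : 0 <= rho * K by rewrite mulr_ge0 // ltW.
  rewrite mulrDr mulr1; lra.
have dbound p : G_delta delta p -> cabs (p - l0) < rho -> N (u p - u l0) <= C0 * cabs (p - l0).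
  move=> hp ht.
  have ht' : K * cabs (p - l0) <= 1 - r.
    have := cabs_ge0 (p - l0) => hc.
    have : cabs (p - l0) * (K + 1) <= rho * (K + 1) by apply: ler_wpM2r; lra; exact: ltW.
    rewrite rhoK mulrDr mulr1 => h; nra.
  have := cont hp ht'; rewrite -/n0 => h.
  rewrite /C0 mulrAC ler_pdivlMr //; apply: le_trans h _.
  by rewrite le_eqVlt; apply/orP; left; apply/eqP; ring.
set B := (K * C0 + K3 * (n0 + C0)) / (1 - r).
exists B, rho; split.
  apply: divr_ge0; last exact: ltW.
  by apply: addr_ge0; apply: mulr_ge0 => //; apply: addr_ge0.
split => // p p' hp hp' hn hn' ht ht'.
have e1 := dbound p hp ht; have e2 := dbound p' hp' ht'.
have e3 : N (u p - u p') <= N (u p - u l0) + N (u p' - u l0).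
  by apply: le_trans (N_triB _ (u l0) _) _; rewrite (NB (u l0)).
have e4 : N (u p') <= n0 + N (u p' - u l0).
  by have := N_tri (u l0) (u p' - u l0); rewrite addrC subrK.
have e5 : cabs (p / 2 - p' / 2) <= (cabs (p - l0) + cabs (p' - l0)) / 2.
  rewrite cabs_half2 ler_pM2r ?invr_gt0 //.
  have -> : p - p' = (p - l0) + - (p' - l0) by rewrite opprB addrA subrK.
  by apply: le_trans (cabsD _ _) _; rewrite cabsN.
have e6 := cstep hp hp' hn hn'.
rewrite /B mulrAC ler_pdivlMr //.
apply: le_trans e6 _.
have := N_ge0 (u p - u l0); have := N_ge0 (u p' - u l0); have := N_ge0 (u p - u p');
have := N_ge0 (u p'); have := cabs_ge0 (p - l0); have := cabs_ge0 (p' - l0);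
have := cabs_ge0 (p / 2 - p' / 2).
move: e1 e2 e3 e4 e5.
set D1 := N (u p - u l0); set D2 := N (u p' - u l0); set d12 := N (u p - u p').
set np := N (u p'); set t1 := cabs (p - l0); set t2 := cabs (p' - l0); set c := cabs (_ - _).
move=> e1 e2 e3 e4 e5 hc ht2 ht1 hnp hd12 hD2 hD1.
have f1 : d12 <= C0 * (t1 + t2) by rewrite mulrDr; lra.
have f2' : C0 * t2 <= C0.
  have h : t2 <= 1 by apply: ltW; apply: lt_le_trans ht' rho1.
  by have := ler_wpM2l hC0 h; rewrite mulr1.
have f2 : np <= n0 + C0 by lra.
have f3 : K * d12 <= K * (C0 * (t1 + t2)) by apply: ler_wpM2l.
have f4 : K3 * c * np <= K3 * ((t1 + t2) / 2) * (n0 + C0).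
  apply: ler_pM => //; first by rewrite mulr_ge0.
  by apply: ler_wpM2l.
have f5 : 0 <= K3 * ((t1 + t2) / 2) * (n0 + C0).
  apply: mulr_ge0; last exact: addr_ge0.
  apply: mulr_ge0 => //; apply: divr_ge0 => //; exact: addr_ge0.
have f6 : 0 <= K * (C0 * (t1 + t2)).
  by apply: mulr_ge0 => //; apply: mulr_ge0 => //; exact: addr_ge0.
have -> : (K * C0 + K3 * (n0 + C0)) * (t1 + t2) =
   K * (C0 * (t1 + t2)) + 2 * (K3 * ((t1 + t2) / 2) * (n0 + C0)) by field.
lra.
Qed.

End Main2.

Lemma holo_at l0 : G_delta delta l0 -> exists v : M,
    forall e : R, 0 < e -> exists d : R, 0 < d /\
      forall h : C, h != 0 -> cabs h < d -> G_delta delta (l0 + h) ->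
        ipnorm ip (h^-1 *: (u (l0 + h) - u l0) - v) < e.
Proof.
move=> hG0.
have [r [r0 [r1 hr]]] := A_contr hG0.
have [B [rho [B0 [rho0 HB]]]] := cauchy_est hG0 r0 r1 hr.
have [v0 [v0n Hv]] := G_dir hG0.
pose tn (n : nat) : R := (n.+1%:R)^-1.
have tn0 n : 0 < tn n by rewrite /tn invr_gt0 ltr0Sn.
have tn1 n : tn n <= 1 by rewrite /tn invf_le1 ?ltr0Sn // ler1n.
pose hs n : C := ((tn n)%:C)%C * v0.
have hsG n : G_delta delta (l0 + hs n) by apply: Hv.
have hs0 n : l0 + hs n - l0 != 0.
  rewrite addrC addKr /hs mulf_neq0 //.
  by rewrite (inj_eq (@complexI _)) gt_eqF.
have hsc n : cabs (l0 + hs n - l0) = tn n * cabs v0.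
  by rewrite addrC addKr /hs cabsM cabs_real ger0_norm // ltW.
have hv0 : 0 <= cabs v0 := cabs_ge0 v0.
have Qe p : p - l0 != 0 -> Q l0 p = (p - l0)^-1 *: (u p - u l0) by [].
pose s n := Q l0 (l0 + hs n).
have [L HL] : exists L : M, forall e : R, 0 < e -> exists N0 : nat, forall n : nat,
     (N0 <= n)%N -> ipnorm ip (s n - L) < e.
  apply: ipcomp => e e0.
  set eta := Order.min rho (e / (2 * (B + 1))).
  have eta0 : 0 < eta by rewrite lt_min rho0 /= divr_gt0 //; lra.
  have [N0 HN0] := small_idx hv0 eta0.
  exists N0 => m n hm hn.
  have hm' : tn m * cabs v0 < eta := HN0 m hm.
  have hn' : tn n * cabs v0 < eta := HN0 n hn.
  have lt1 : forall k, (N0 <= k)%N -> cabs (l0 + hs k - l0) < rho.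
    move=> k hk; rewrite hsc; apply: lt_le_trans (HN0 k hk) _; by rewrite ge_min lexx.
  have := HB _ _ (hsG m) (hsG n) (hs0 m) (hs0 n) (lt1 m hm) (lt1 n hn).
  rewrite !hsc => h; apply: le_lt_trans h _.
  have he : eta <= e / (2 * (B + 1)) by by rewrite ge_min lexx orbT.
  have hB1 : 0 < B + 1 by lra.
  have : B * (tn m * cabs v0 + tn n * cabs v0) <= B * (2 * eta).
    by apply: ler_wpM2l => //; lra.
  have : B * (2 * eta) <= B * (2 * (e / (2 * (B + 1)))) by apply: ler_wpM2l => //; lra.
  have -> : B * (2 * (e / (2 * (B + 1)))) = e * (B / (B + 1)) by field; lra.
  have : e * (B / (B + 1)) < e.
    rewrite -{2}(mulr1 e) ltr_pM2l // ltr_pdivrMr // mul1r; lra.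
  lra.
exists L => e e0.
set eta := Order.min rho (e / (3 * (B + 1))).
have eta0 : 0 < eta by rewrite lt_min rho0 /= divr_gt0 //; lra.
exists eta; split => // h hn hh hG.
have e3 : 0 < e / 3 by rewrite divr_gt0.
have [N1 HN1] := HL _ e3.
have [N2 HN2] := small_idx hv0 eta0.
set n := maxn N1 N2.
have h1 := HN1 n (leq_maxl _ _).
have h2 : tn n * cabs v0 < eta := HN2 n (leq_maxr _ _).
have ph : l0 + h - l0 = h by rewrite addrC addKr.
have hpn : l0 + h - l0 != 0 by rewrite ph.
have hpr : cabs (l0 + h - l0) < rho by rewrite ph; apply: lt_le_trans hh _; by rewrite ge_min lexx.
have hnr : cabs (l0 + hs n - l0) < rho by rewrite hsc; apply: lt_le_trans h2 _; by rewrite ge_min lexx.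
have h3 := HB _ _ hG (hsG n) hpn (hs0 n) hpr hnr.
rewrite ph hsc in h3.
have eQ : h^-1 *: (u (l0 + h) - u l0) = Q l0 (l0 + h) by rewrite /Q ph.
rewrite eQ -/(N _).
apply: le_lt_trans (N_triB _ (s n) _) _.
rewrite -/(N _) in h1.
have he : eta <= e / (3 * (B + 1)) by by rewrite ge_min lexx orbT.
have hB1 : 0 < B + 1 by lra.
have hsum : cabs h + tn n * cabs v0 < 2 * eta by lra.
have : B * (cabs h + tn n * cabs v0) <= B * (2 * eta) by apply: ler_wpM2l => //; lra.
have : B * (2 * eta) <= B * (2 * (e / (3 * (B + 1)))) by apply: ler_wpM2l => //; lra.
have -> : B * (2 * (e / (3 * (B + 1)))) = (e * 2 / 3) * (B / (B + 1)) by field; lra.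
have : (e * 2 / 3) * (B / (B + 1)) <= e * 2 / 3.
  rewrite -{2}(mulr1 (e * 2 / 3)) ler_pM2l ?divr_gt0 ?mulr_gt0 //.
  by rewrite ler_pdivrMr // mul1r; lra.
move: h3; rewrite -/(s n) => h3.
lra.
Qed.

End Main.

End Ops.

End H.

Unset Implicit Arguments.
Set Strict Implicit.
Theorem proposition2p8 (R : realType) (delta : R) (f : R[i] -> R[i])
  (M : lmodType R[i]) (ip : M -> M -> R[i]) (U Ustar : M -> M)
  (u : R[i] -> M) :
  0 < delta < 1 ->
  is_hilbert ip ->
  is_unitary_op ip U Ustar ->
  (forall lam mu : R[i], G_delta delta lam -> G_delta delta mu ->
     1 - conjc (f mu) * f lam =
     ip (u lam - hadj ip (lamU delta Ustar mu) (lamU delta Ustar lam (u lam)))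
        (u mu)) ->
  holomorphic_on ip (G_delta delta) u.
Proof.
move=> /andP[d0 d1] [ipl ipc ipp ipd ipcomp] [UL Uadj UK UsK] Hyp.
have Hk : forall lam mu, G_delta delta lam -> G_delta delta mu ->
  ip (u lam) (u mu) = 1 - conjc (f mu) * f lam
     + ip (A Ustar delta lam (u lam)) (A Ustar delta mu (u mu)).
  move=> lam mu hl hm.
  have e := Hyp lam mu hl hm.
  have hs := hadj_spec ipl ipc ipp ipd ipcomp UL Uadj UK UsK delta
     (A Ustar delta lam (u lam)) (G_lt1 d0 d1 hm) (u mu).
  rewrite (ipBl ipl) in e.
  have e1 : ip (hadj ip (lamU delta Ustar mu) (lamU delta Ustar lam (u lam))) (u mu)
     = ip (A Ustar delta lam (u lam)) (A Ustar delta mu (u mu)).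
    rewrite (ipc (u mu)) -hs (ipc (A Ustar delta lam (u lam))).
    by rewrite conjcK'.
  by rewrite e1 in e; rewrite e subrK.
move=> l0 hG0.
exact: (holo_at ipl ipc ipp ipd ipcomp UL Uadj UK UsK d0 d1 Hk hG0).
Qed.
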